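(* Let $\mathcal M_{AI}$ be the category whose objects are countable discrete metric spaces of bounded geometry and whose morphisms are almost isometries. Then $f\mapsto M_{d_f}$ is a functor from $\mathcal M_{AI}$ to $\mathcal M$: for almost isometries $f:X\to Y$, $g:Y\to Z$ between bounded geometry spaces, $M_{d_{g\circ f}}(X,Z)=M_{d_f}(X,Y)\hat\otimes M_{d_g}(Y,Z)=M_{d_g\circ d_f}(X,Z)$, and $M_{d_{\mathrm{id}_X}}(X,X)=C^*_u(X)$.
   Context: Bounded geometry: for every $R>0$ the number of points in balls of radius $R$ is finite and uniformly bounded. An almost isometry $f:X\to Y$ satisfies $d_X(x,x')-C\le d_Y(f(x),f(x'))\le d_X(x,x')+C$ for some $C>0$; $d_f$ is the metric on $X\sqcup Y$ extending $d_X,d_Y$ with $d_f(x,y)=\inf_{\tilde x\in X}(d_X(x,\tilde x)+C/2+d_Y(f(\tilde x),y))$. $\mathcal M$ is the category whose objects are countable discrete metric spaces and whose morphisms $X\to Y$ are the spaces $M_d(X,Y)$, $d$ a metric on $X\sqcup Y$ extending $d_X,d_Y$, where $M_d(X,Y)$ is the norm closure in $\mathbb B(l^2(X),l^2(Y))$ of bounded operators $T$ of finite propagation (i.e. $\langle T\delta_x,\delta_y\rangle=0$ whenever $d(x,y)\ge L$, for some $L$); composition is $(M_{d_1}(X,Y),M_{d_2}(Y,Z))\mapsto M_{d_2\circ d_1}(X,Z)$, with $(d_2\circ d_1)(x,z)=\inf_y(d_1(x,y)+d_2(y,z))$. $M\hat\otimes N$ is the norm closure of the span of compositions $S\circ T$,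 $T\in M$, $S\in N$. $C^*_u(X)$ is the uniform Roe algebra (norm closure of finite-propagation bounded operators on $l^2(X)$). *)

(* Defs.v *)
From Stdlib Require Import Reals List Classical ClassicalEpsilon.
Import ListNotations.
Open Scope R_scope.

Record cpx := mkC { re : R; im : R }.
Definition c0 : cpx := mkC 0 0.
Definition c1 : cpx := mkC 1 0.
Definition cadd (a b : cpx) := mkC (re a + re b) (im a + im b).
Definition csub (a b : cpx) := mkC (re a - re b) (im a - im b).
Definition cmul (a b : cpx) :=
  mkC (re a * re b - im a * im b) (re a * im b + im a * re b).
Definition cnorm2 (a : cpx) : R := re a * re a + im a * im a.

Record CDMS := {
  pt :> Type;
  dist : pt -> pt -> R;
  dist_nonneg : forall x y, 0 <= dist x y;
  dist_sym : forall x y, dist x y = dist y x;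
  dist_eq0 : forall x y, dist x y = 0 <-> x = y;
  dist_tri : forall x y z, dist x z <= dist x y + dist y z;
  countable : exists e : pt -> nat, forall x y, e x = e y -> x = y;
  discrete : forall x, exists r, 0 < r /\ forall y, dist x y < r -> y = x
}.

Definition bounded_geometry (X : CDMS) : Prop :=
  forall Rad, exists N : nat, forall (x : X) (l : list X),
    NoDup l -> (forall y, In y l -> dist X x y <= Rad) -> (length l <= N)%nat.

Definition almost_isometry (X Y : CDMS) (f : X -> Y) (C : R) : Prop :=
  0 < C /\ forall x x' : X,
    dist X x x' - C <= dist Y (f x) (f x') /\ dist Y (f x) (f x') <= dist X x x' + C.

Definition is_glb (S : R -> Prop) (m : R) : Prop :=
  (forall r, S r -> m <= r) /\ (forall m', (forall r, S r -> m' <= r) -> m' <= m).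
Definition Rinf (S : R -> Prop) : R := epsilon (inhabits 0) (fun m => is_glb S m).

(** A metric on X ⊔ Y extending d_X and d_Y is determined by its cross
    distances dc : X -> Y -> R; this predicate says the glued function is a
    metric. *)
Definition is_metric_ext (X Y : CDMS) (dc : X -> Y -> R) : Prop :=
  (forall x y, 0 < dc x y) /\
  (forall (x x' : X) (y : Y), dc x y <= dist X x x' + dc x' y) /\
  (forall (x : X) (y y' : Y), dc x y <= dc x y' + dist Y y' y) /\
  (forall (x x' : X) (y : Y), dist X x x' <= dc x y + dc x' y) /\
  (forall (x : X) (y y' : Y), dist Y y y' <= dc x y + dc x y').

Definition d_f (X Y : CDMS) (f : X -> Y) (C : R) (x : X) (y : Y) : R :=
  Rinf (fun r => exists xt : X, r = dist X x xt + C / 2 + dist Y (f xt) y).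

Definition dcomp (X Y Z : CDMS) (d1 : X -> Y -> R) (d2 : Y -> Z -> R)
  (x : X) (z : Z) : R :=
  Rinf (fun r => exists y : Y, r = d1 x y + d2 y z).

Definition sumsq {X : Type} (v : X -> cpx) (l : list X) : R :=
  fold_right (fun x acc => cnorm2 (v x) + acc) 0 l.
Definition normle {X : Type} (v : X -> cpx) (r : R) : Prop :=
  forall l : list X, NoDup l -> sumsq v l <= r * r.
Definition l2 {X : Type} (v : X -> cpx) : Prop := exists r, 0 <= r /\ normle v r.

Definition opbound {X Y : Type} (F : (X -> cpx) -> (Y -> cpx)) (c : R) : Prop :=
  forall v r, 0 <= r -> normle v r -> normle (F v) (c * r).

Record Op (X Y : Type) := {
  app :> (X -> cpx) -> (Y -> cpx);
  op_add : forall u v, l2 u -> l2 v -> forall y,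
     app (fun x => cadd (u x) (v x)) y = cadd (app u y) (app v y);
  op_scal : forall a u, l2 u -> forall y,
     app (fun x => cmul a (u x)) y = cmul a (app u y);
  op_bdd : exists c, 0 <= c /\ opbound app c
}.
Arguments app {X Y}.

Definition delta {X : Type} (x : X) : X -> cpx :=
  fun x' => if excluded_middle_informative (x = x') then c1 else c0.

Definition finite_prop {X Y : Type} (dc : X -> Y -> R) (T : Op X Y) : Prop :=
  exists L, forall x y, L <= dc x y -> app T (delta x) y = c0.

Definition Mspace {X Y : Type} (dc : X -> Y -> R) (T : Op X Y) : Prop :=
  forall eps, 0 < eps -> exists S : Op X Y,
    finite_prop dc S /\ opbound (fun v y => csub (app T v y) (app S v y)) eps.

Definition Cu (X : CDMS) : Op X X -> Prop := Mspace (dist X).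

(** M ⊗^ N : norm closure of the linear span of compositions S ∘ T *)
Definition lincomb {X Y Z : Type} (l : list (cpx * Op X Y * Op Y Z))
  (v : X -> cpx) (z : Z) : cpx :=
  fold_right (fun p acc => cadd (cmul (fst (fst p)) (app (snd p) (app (snd (fst p)) v) z)) acc) c0 l.

Definition tensor {X Y Z : Type} (M : Op X Y -> Prop) (N : Op Y Z -> Prop)
  (Rop : Op X Z) : Prop :=
  forall eps, 0 < eps -> exists l : list (cpx * Op X Y * Op Y Z),
    Forall (fun p => M (snd (fst p)) /\ N (snd p)) l /\
    opbound (fun v z => csub (app Rop v z) (lincomb l v z)) eps.

Definition same_ops {X Y : Type} (M N : Op X Y -> Prop) : Prop :=
  forall T, M T <-> N T.

(* Main.v *)
Require Import Defs.
From Stdlib Require Import Reals Lra Lia List Classical ClassicalEpsilon FunctionalExtensionality.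
Require Import Defs.
Import ListNotations.
Open Scope R_scope.

Lemma cpx_eq (a b : cpx) : re a = re b -> im a = im b -> a = b.
Proof. destruct a, b; simpl; intros; subst; reflexivity. Qed.

Ltac ceq := apply cpx_eq; unfold cadd, csub, cmul, c0, c1; simpl; ring.

Lemma cnorm2_nonneg a : 0 <= cnorm2 a.
Proof. unfold cnorm2; nra. Qed.

Lemma cnorm2_c0 : cnorm2 c0 = 0.
Proof. unfold cnorm2, c0; simpl; ring. Qed.

Lemma cnorm2_cmul a b : cnorm2 (cmul a b) = cnorm2 a * cnorm2 b.
Proof. unfold cnorm2, cmul; simpl; ring. Qed.

Lemma cnorm2_cadd_le a b t : 0 < t ->
  cnorm2 (cadd a b) <= (1 + t) * cnorm2 a + (1 + / t) * cnorm2 b.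
Proof.
  intros Ht. unfold cnorm2, cadd; simpl.
  set (p := re a); set (q := im a); set (u := re b); set (w := im b).
  assert (H1 : 0 <= t * ((t * p - u) * (t * p - u) + (t * q - w) * (t * q - w))).
  { apply Rmult_le_pos; [lra|]. pose proof (Rle_0_sqr (t*p-u)); pose proof (Rle_0_sqr (t*q-w)); unfold Rsqr in *; lra. }
  assert (E : (1 + t) * (p * p + q * q) + (1 + / t) * (u * u + w * w)
     - ((p + u) * (p + u) + (q + w) * (q + w))
     = / t * / t * (t * ((t * p - u) * (t * p - u) + (t * q - w) * (t * q - w)))).
  { field. lra. }
  assert (0 <= / t * / t * (t * ((t * p - u) * (t * p - u) + (t * q - w) * (t * q - w)))).
  { apply Rmult_le_pos; [|exact H1]. apply Rmult_le_pos; left; apply Rinv_0_lt_compat; lra. }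
  lra.
Qed.

Lemma sumsq_nonneg {X} (v : X -> cpx) l : 0 <= sumsq v l.
Proof. induction l; simpl; [lra|]. pose proof (cnorm2_nonneg (v a)); lra. Qed.

Lemma sumsq_ext {X} (u v : X -> cpx) l : (forall x, In x l -> cnorm2 (u x) = cnorm2 (v x)) ->
  sumsq u l = sumsq v l.
Proof.
  induction l; simpl; intros H; [reflexivity|].
  rewrite H by auto. rewrite IHl; auto.
Qed.

Lemma sumsq_dom {X} (u v : X -> cpx) l : (forall x, cnorm2 (u x) <= cnorm2 (v x)) ->
  sumsq u l <= sumsq v l.
Proof. induction l; simpl; intros H; [lra|]. specialize (H a) as H'. specialize (IHl H). lra. Qed.

Lemma sumsq_add {X} (u v : X -> cpx) l t : 0 < t ->
  sumsq (fun x => cadd (u x) (v x)) l <= (1 + t) * sumsq u l + (1 + / t) * sumsq v l.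
Proof.
  intros Ht; induction l; simpl; [lra|].
  pose proof (cnorm2_cadd_le (u a) (v a) t Ht). lra.
Qed.

Lemma sumsq_scal {X} (v : X -> cpx) a l :
  sumsq (fun x => cmul a (v x)) l = cnorm2 a * sumsq v l.
Proof. induction l; simpl; [ring|]. rewrite cnorm2_cmul, IHl; ring. Qed.

Lemma normle_ext {X} (u v : X -> cpx) r : (forall x, u x = v x) -> normle v r -> normle u r.
Proof. intros E H l Hl. rewrite (sumsq_ext u v) by (intros; rewrite E; auto). auto. Qed.

Lemma normle_dom {X} (u v : X -> cpx) r : (forall x, cnorm2 (u x) <= cnorm2 (v x)) ->
  normle v r -> normle u r.
Proof. intros E H l Hl. eapply Rle_trans; [apply sumsq_dom; eauto|]. auto. Qed.

Lemma normle_mono {X} (v : X -> cpx) r r' : 0 <= r -> r <= r' -> normle v r -> normle v r'.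
Proof. intros H0 H1 H l Hl. specialize (H l Hl). nra. Qed.

Lemma normle_nonneg_sq {X} (v : X -> cpx) r : normle v r -> 0 <= r * r.
Proof. intros H. specialize (H nil (NoDup_nil _)). simpl in H. lra. Qed.

Lemma normle_zero {X} r : 0 <= r -> normle (fun _ : X => c0) r.
Proof. intros Hr l _. induction l; simpl; [nra|]. rewrite cnorm2_c0. lra. Qed.

Lemma le_of_slack S c : 0 <= c -> (forall d, 0 < d -> S <= (c + d) * (c + d)) -> S <= c * c.
Proof.
  intros Hc H. destruct (Rle_dec S (c * c)) as [h|h]; [exact h|].
  exfalso. apply Rnot_le_lt in h.
  set (d := Rmin 1 ((S - c * c) / (2 * (2 * c + 1)))).
  assert (Hd : 0 < d). { unfold d. apply Rmin_glb_lt; [lra|]. apply Rdiv_lt_0_compat; lra. }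
  assert (Hd1 : d <= 1) by apply Rmin_l.
  assert (Hd2 : d <= (S - c * c) / (2 * (2 * c + 1))) by apply Rmin_r.
  specialize (H d Hd).
  assert (d * (2 * (2 * c + 1)) <= S - c * c).
  { apply (Rmult_le_compat_r (2 * (2 * c + 1))) in Hd2; [|lra].
    unfold Rdiv in Hd2. rewrite Rmult_assoc, Rinv_l in Hd2 by lra. lra. }
  nra.
Qed.

Lemma normle_add {X} (u v : X -> cpx) a b : 0 <= a -> 0 <= b -> normle u a -> normle v b ->
  normle (fun x => cadd (u x) (v x)) (a + b).
Proof.
  intros Ha Hb Hu Hv l Hl. apply le_of_slack; [lra|]. intros d Hd.
  set (a' := a + d / 2). set (b' := b + d / 2).
  assert (0 < a') by (unfold a'; lra). assert (0 < b') by (unfold b'; lra).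
  eapply Rle_trans; [apply (sumsq_add u v l (b' / a')); apply Rdiv_lt_0_compat; lra|].
  pose proof (Hu l Hl); pose proof (Hv l Hl).
  assert (sumsq u l <= a' * a') by (unfold a'; nra).
  assert (sumsq v l <= b' * b') by (unfold b'; nra).
  assert (E : (1 + b' / a') * (a' * a') + (1 + / (b' / a')) * (b' * b') = (a' + b') * (a' + b'))
    by (field; lra).
  replace (a + b + d) with (a' + b') by (unfold a', b'; lra).
  rewrite <- E.
  assert (0 < b' / a') by (apply Rdiv_lt_0_compat; lra).
  assert (0 < / (b' / a')) by (apply Rinv_0_lt_compat; lra).
  apply Rplus_le_compat; apply Rmult_le_compat_l; lra.
Qed.

Definition cabs (a : cpx) := sqrt (cnorm2 a).

Lemma cabs_nonneg a : 0 <= cabs a.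
Proof. apply sqrt_pos. Qed.

Lemma normle_scal {X} (v : X -> cpx) a r : 0 <= r -> normle v r ->
  normle (fun x => cmul a (v x)) (cabs a * r).
Proof.
  intros Hr H l Hl. rewrite sumsq_scal. specialize (H l Hl).
  unfold cabs. pose proof (cnorm2_nonneg a).
  replace (sqrt (cnorm2 a) * r * (sqrt (cnorm2 a) * r)) with
    ((sqrt (cnorm2 a) * sqrt (cnorm2 a)) * (r * r)) by ring.
  rewrite sqrt_sqrt by lra. apply Rmult_le_compat_l; lra.
Qed.

Lemma l2_add {X} (u v : X -> cpx) : l2 u -> l2 v -> l2 (fun x => cadd (u x) (v x)).
Proof. intros [a [Ha Hu]] [b [Hb Hv]]. exists (a + b). split; [lra|]. apply normle_add; auto. Qed.

Lemma l2_scal {X} (u : X -> cpx) a : l2 u -> l2 (fun x => cmul a (u x)).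
Proof. intros [r [Hr H]]. exists (cabs a * r). split.
  - apply Rmult_le_pos; auto. apply cabs_nonneg.
  - apply normle_scal; auto. Qed.

Lemma l2_zero {X} : l2 (fun _ : X => c0).
Proof. exists 0. split; [lra|]. apply normle_zero; lra. Qed.

Lemma l2_dom {X} (u v : X -> cpx) : (forall x, cnorm2 (u x) <= cnorm2 (v x)) -> l2 v -> l2 u.
Proof. intros E [r [Hr H]]. exists r. split; auto. eapply normle_dom; eauto. Qed.

Definition cm1 : cpx := mkC (-1) 0.
Lemma csub_as (a b : cpx) : csub a b = cadd a (cmul cm1 b).
Proof. ceq. Qed.
Lemma cabs_cm1 : cabs cm1 = 1.
Proof. unfold cabs, cnorm2, cm1; simpl. replace (-1 * -1 + 0 * 0) with 1 by ring. apply sqrt_1. Qed.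

Lemma opbound_ext {X Y} (F G : (X -> cpx) -> Y -> cpx) c :
  (forall v r, 0 <= r -> normle v r -> forall y, F v y = G v y) -> opbound G c -> opbound F c.
Proof. intros E H v r Hr Hv. eapply normle_ext; [|apply (H v r Hr Hv)]. intros; eauto. Qed.

Lemma opbound_mono {X Y} (F : (X -> cpx) -> Y -> cpx) c c' : 0 <= c -> c <= c' ->
  opbound F c -> opbound F c'.
Proof. intros H0 H1 H v r Hr Hv. eapply normle_mono; [| |apply (H v r Hr Hv)]; nra. Qed.

Lemma opbound_add {X Y} (F G : (X -> cpx) -> Y -> cpx) a b : 0 <= a -> 0 <= b ->
  opbound F a -> opbound G b -> opbound (fun v y => cadd (F v y) (G v y)) (a + b).
Proof.
  intros Ha Hb HF HG v r Hr Hv. rewrite Rmult_plus_distr_r.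
  apply normle_add; [nra|nra|auto|auto].
Qed.

Lemma opbound_scal {X Y} (F : (X -> cpx) -> Y -> cpx) a c : 0 <= c ->
  opbound F c -> opbound (fun v y => cmul a (F v y)) (cabs a * c).
Proof.
  intros Hc HF v r Hr Hv. rewrite Rmult_assoc. apply normle_scal; [nra|auto].
Qed.

Lemma opbound_sub {X Y} (F G : (X -> cpx) -> Y -> cpx) a b : 0 <= a -> 0 <= b ->
  opbound F a -> opbound G b -> opbound (fun v y => csub (F v y) (G v y)) (a + b).
Proof.
  intros Ha Hb HF HG. eapply opbound_ext; [intros; apply csub_as|].
  pose proof (opbound_scal G cm1 b Hb HG) as H. rewrite cabs_cm1, Rmult_1_l in H.
  apply opbound_add; auto.
Qed.

Lemma opbound_comp {X Y Z} (F : (X -> cpx) -> Y -> cpx) (G : (Y -> cpx) -> Z -> cpx) a b :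
  0 <= a -> 0 <= b -> opbound F a -> opbound G b -> opbound (fun v => G (F v)) (b * a).
Proof.
  intros Ha Hb HF HG v r Hr Hv. rewrite Rmult_assoc. apply HG; [nra|]. apply HF; auto.
Qed.

Lemma opbound_zero {X Y} c : 0 <= c -> opbound (fun (v : X -> cpx) (y : Y) => c0) c.
Proof. intros Hc v r Hr Hv. apply normle_zero. nra. Qed.

Lemma opbound_nonneg_ex {X Y} (T : Op X Y) : exists c, 0 <= c /\ opbound T c.
Proof. apply op_bdd. Qed.

Lemma op_l2 {X Y} (T : Op X Y) u : l2 u -> l2 (app T u).
Proof.
  intros [r [Hr Hu]]. destruct (op_bdd _ _ T) as [c [Hc HT]].
  exists (c * r). split; [nra|]. apply HT; auto.
Qed.

Lemma op_ext {X Y} (T : Op X Y) u v : (forall x, u x = v x) -> app T u = app T v.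
Proof. intros E. f_equal. apply functional_extensionality; auto. Qed.

Lemma op_zero {X Y} (T : Op X Y) y : app T (fun _ => c0) y = c0.
Proof.
  pose proof (op_scal _ _ T c0 (fun _ => c0) l2_zero y) as H.
  rewrite (op_ext T (fun _ => c0) (fun x => cmul c0 c0)) by (intros; ceq).
  rewrite H. ceq.
Qed.

Lemma op_sub {X Y} (T : Op X Y) u v : l2 u -> l2 v -> forall y,
  app T (fun x => csub (u x) (v x)) y = csub (app T u y) (app T v y).
Proof.
  intros Hu Hv y.
  rewrite (op_ext T _ (fun x => cadd (u x) (cmul cm1 (v x)))) by (intros; apply csub_as).
  rewrite op_add; auto using l2_scal. rewrite op_scal; auto. rewrite csub_as; reflexivity.
Qed.

Definition lsum {I X : Type} (l : list I) (h : I -> X -> cpx) : X -> cpx :=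
  fun x => fold_right (fun i acc => cadd (h i x) acc) c0 l.

Lemma l2_lsum {I X} (l : list I) (h : I -> X -> cpx) :
  (forall i, In i l -> l2 (h i)) -> l2 (lsum l h).
Proof.
  induction l; intros H; simpl.
  - apply l2_zero.
  - unfold lsum; simpl. apply (l2_add (h a) (lsum l h)); [auto with datatypes|].
    apply IHl; auto with datatypes.
Qed.

Lemma op_lsum {I X Y} (T : Op X Y) (l : list I) (h : I -> X -> cpx) :
  (forall i, In i l -> l2 (h i)) -> forall y,
  app T (lsum l h) y = fold_right (fun i acc => cadd (app T (h i) y) acc) c0 l.
Proof.
  induction l; intros H y; simpl.
  - unfold lsum; simpl. apply op_zero.
  - change (lsum (a :: l) h) with (fun x => cadd (h a x) (lsum l h x)).
    rewrite op_add; try (apply l2_lsum; intros; apply H; simpl; auto); auto with datatypes.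
    rewrite IHl; auto with datatypes.
Qed.

Section Constr.
Context {X Y Z : Type}.

Lemma comp_add (S : Op Y Z) (T : Op X Y) : forall u v, l2 u -> l2 v -> forall z,
  app S (app T (fun x => cadd (u x) (v x))) z = cadd (app S (app T u) z) (app S (app T v) z).
Proof.
  intros u v Hu Hv z.
  rewrite (op_ext S _ (fun y => cadd (app T u y) (app T v y))) by (intros; apply op_add; auto).
  apply op_add; apply op_l2; auto.
Qed.
Lemma comp_scal (S : Op Y Z) (T : Op X Y) : forall a u, l2 u -> forall z,
  app S (app T (fun x => cmul a (u x))) z = cmul a (app S (app T u) z).
Proof.
  intros a u Hu z.
  rewrite (op_ext S _ (fun y => cmul a (app T u y))) by (intros; apply op_scal; auto).
  apply op_scal; apply op_l2; auto.
Qed.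
Lemma comp_bdd (S : Op Y Z) (T : Op X Y) : exists c, 0 <= c /\ opbound (fun v => app S (app T v)) c.
Proof.
  destruct (op_bdd _ _ S) as [a [Ha HS]]. destruct (op_bdd _ _ T) as [b [Hb HT]].
  exists (a * b). split; [nra|]. apply (opbound_comp (app T) (app S)); auto.
Qed.
Definition compOp (S : Op Y Z) (T : Op X Y) : Op X Z :=
  {| app := fun v => app S (app T v); op_add := comp_add S T; op_scal := comp_scal S T;
     op_bdd := comp_bdd S T |}.

Lemma add_add (S T : Op X Y) : forall u v, l2 u -> l2 v -> forall y,
  cadd (app S (fun x => cadd (u x) (v x)) y) (app T (fun x => cadd (u x) (v x)) y) =
  cadd (cadd (app S u y) (app T u y)) (cadd (app S v y) (app T v y)).
Proof. intros. rewrite !op_add by auto. ceq. Qed.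
Lemma add_scal (S T : Op X Y) : forall a u, l2 u -> forall y,
  cadd (app S (fun x => cmul a (u x)) y) (app T (fun x => cmul a (u x)) y) =
  cmul a (cadd (app S u y) (app T u y)).
Proof. intros. rewrite !op_scal by auto. ceq. Qed.
Lemma add_bdd (S T : Op X Y) : exists c, 0 <= c /\
  opbound (fun v y => cadd (app S v y) (app T v y)) c.
Proof.
  destruct (op_bdd _ _ S) as [a [Ha HS]]. destruct (op_bdd _ _ T) as [b [Hb HT]].
  exists (a + b). split; [lra|]. apply opbound_add; auto.
Qed.
Definition addOp (S T : Op X Y) : Op X Y :=
  {| app := fun v y => cadd (app S v y) (app T v y); op_add := add_add S T;
     op_scal := add_scal S T; op_bdd := add_bdd S T |}.

Lemma scal_add (a : cpx) (S : Op X Y) : forall u v, l2 u -> l2 v -> forall y,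
  cmul a (app S (fun x => cadd (u x) (v x)) y) =
  cadd (cmul a (app S u y)) (cmul a (app S v y)).
Proof. intros. rewrite !op_add by auto. ceq. Qed.
Lemma scal_scal (a : cpx) (S : Op X Y) : forall b u, l2 u -> forall y,
  cmul a (app S (fun x => cmul b (u x)) y) = cmul b (cmul a (app S u y)).
Proof. intros. rewrite !op_scal by auto. ceq. Qed.
Lemma scal_bdd (a : cpx) (S : Op X Y) : exists c, 0 <= c /\
  opbound (fun v y => cmul a (app S v y)) c.
Proof.
  destruct (op_bdd _ _ S) as [c [Hc HS]].
  exists (cabs a * c). split; [apply Rmult_le_pos; auto; apply cabs_nonneg|].
  apply opbound_scal; auto.
Qed.
Definition scalOp (a : cpx) (S : Op X Y) : Op X Y :=
  {| app := fun v y => cmul a (app S v y); op_add := scal_add a S;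
     op_scal := scal_scal a S; op_bdd := scal_bdd a S |}.

Lemma zero_add : forall u v : X -> cpx, l2 u -> l2 v -> forall y : Y, c0 = cadd c0 c0.
Proof. intros. ceq. Qed.
Lemma zero_scal : forall a (u : X -> cpx), l2 u -> forall y : Y, c0 = cmul a c0.
Proof. intros. ceq. Qed.
Lemma zero_bdd : exists c, 0 <= c /\ opbound (fun (v : X -> cpx) (y : Y) => c0) c.
Proof. exists 0. split; [lra|]. apply opbound_zero; lra. Qed.
Definition zeroOp : Op X Y :=
  {| app := fun v y => c0; op_add := zero_add; op_scal := zero_scal; op_bdd := zero_bdd |}.
End Constr.

Section MS.
Context {X Y : Type}.

Lemma Mspace_ext (dc : X -> Y -> R) (T1 T2 : Op X Y) :
  (forall v r, 0 <= r -> normle v r -> forall y, app T1 v y = app T2 v y) ->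
  Mspace dc T2 -> Mspace dc T1.
Proof.
  intros E H eps He. destruct (H eps He) as [S [HS HB]]. exists S. split; auto.
  eapply opbound_ext; [|exact HB]. intros v r Hr Hv y. simpl. rewrite (E v r); auto.
Qed.

Lemma Mspace_of_fp (dc : X -> Y -> R) (T : Op X Y) : finite_prop dc T -> Mspace dc T.
Proof.
  intros H eps He. exists T. split; auto.
  eapply opbound_ext; [|apply (opbound_zero eps); lra]. intros; simpl; ceq.
Qed.

Lemma Mspace_closed (dc : X -> Y -> R) (T : Op X Y) :
  (forall eps, 0 < eps -> exists S, Mspace dc S /\
     opbound (fun v y => csub (app T v y) (app S v y)) eps) -> Mspace dc T.
Proof.
  intros H eps He. destruct (H (eps/2)) as [S [HS HB]]; [lra|].
  destruct (HS (eps/2)) as [S' [HS' HB']]; [lra|].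
  exists S'. split; auto.
  eapply opbound_ext; [|replace eps with (eps/2 + eps/2) by field;
     apply (opbound_add _ _ (eps/2) (eps/2) ltac:(lra) ltac:(lra) HB HB')].
  intros; simpl; ceq.
Qed.

Lemma fp_add (dc : X -> Y -> R) (S T : Op X Y) :
  finite_prop dc S -> finite_prop dc T -> finite_prop dc (addOp S T).
Proof.
  intros [L1 H1] [L2 H2]. exists (Rmax L1 L2). intros x y Hl. simpl.
  rewrite H1, H2. ceq.
  eapply Rle_trans; [apply Rmax_r|exact Hl].
  eapply Rle_trans; [apply Rmax_l|exact Hl].
Qed.

Lemma fp_scal (dc : X -> Y -> R) a (S : Op X Y) :
  finite_prop dc S -> finite_prop dc (scalOp a S).
Proof. intros [L H]. exists L. intros x y Hl. simpl. rewrite H by auto. ceq. Qed.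

Lemma fp_zero (dc : X -> Y -> R) : finite_prop dc (@zeroOp X Y).
Proof. exists 0. intros. reflexivity. Qed.

Lemma Mspace_add (dc : X -> Y -> R) (S T : Op X Y) :
  Mspace dc S -> Mspace dc T -> Mspace dc (addOp S T).
Proof.
  intros HS HT eps He. destruct (HS (eps/2)) as [S' [F1 B1]]; [lra|].
  destruct (HT (eps/2)) as [T' [F2 B2]]; [lra|].
  exists (addOp S' T'). split; [apply fp_add; auto|].
  eapply opbound_ext; [|replace eps with (eps/2 + eps/2) by field;
     apply (opbound_add _ _ (eps/2) (eps/2) ltac:(lra) ltac:(lra) B1 B2)].
  intros; simpl; ceq.
Qed.

Lemma Mspace_scal (dc : X -> Y -> R) a (S : Op X Y) :
  Mspace dc S -> Mspace dc (scalOp a S).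
Proof.
  intros HS eps He. pose proof (cabs_nonneg a).
  destruct (HS (eps / (cabs a + 1))) as [S' [F1 B1]]; [apply Rdiv_lt_0_compat; lra|].
  exists (scalOp a S'). split; [apply fp_scal; auto|].
  eapply opbound_mono; [| |eapply opbound_ext; [|apply (opbound_scal _ a (eps / (cabs a + 1)) ltac:(left; apply Rdiv_lt_0_compat; lra) B1)]].
  - apply Rmult_le_pos; [lra|]. left; apply Rdiv_lt_0_compat; lra.
  - unfold Rdiv. replace (cabs a * (eps * / (cabs a + 1))) with (eps * (cabs a / (cabs a + 1))) by (field; lra).
    assert (cabs a / (cabs a + 1) <= 1). { apply (Rmult_le_reg_r (cabs a + 1)); [lra|]. unfold Rdiv; rewrite Rmult_assoc, Rinv_l by lra. lra. } nra.
  - intros; simpl; ceq.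
Qed.

Lemma Mspace_zero (dc : X -> Y -> R) : Mspace dc (@zeroOp X Y).
Proof. apply Mspace_of_fp, fp_zero. Qed.

Lemma fp_mono (dc1 dc2 : X -> Y -> R) (S : Op X Y) :
  (forall L, exists L', forall x y, L' <= dc2 x y -> L <= dc1 x y) ->
  finite_prop dc1 S -> finite_prop dc2 S.
Proof.
  intros H [L HL]. destruct (H L) as [L' HL']. exists L'. intros x y Hxy. apply HL, HL'; auto.
Qed.

Lemma Mspace_mono (dc1 dc2 : X -> Y -> R) (T : Op X Y) :
  (forall L, exists L', forall x y, L' <= dc2 x y -> L <= dc1 x y) ->
  Mspace dc1 T -> Mspace dc2 T.
Proof.
  intros H HT eps He. destruct (HT eps He) as [S [F B]]. exists S. split; auto.
  eapply fp_mono; eauto.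
Qed.
End MS.

Lemma Mspace_comp {X Y Z : Type} (df : X -> Y -> R) (dg : Y -> Z -> R) (d3 : X -> Z -> R)
  (S : Op Y Z) (T : Op X Y) :
  (forall S' T', finite_prop dg S' -> finite_prop df T' -> finite_prop d3 (compOp S' T')) ->
  Mspace dg S -> Mspace df T -> Mspace d3 (compOp S T).
Proof.
  intros Hfp HS HT eps He.
  destruct (op_bdd _ _ S) as [cS [HcS BS]]. destruct (op_bdd _ _ T) as [cT [HcT BT]].
  set (K := cS + cT + 1).
  set (dl := Rmin 1 (eps / K)).
  assert (HK : 0 < K) by (unfold K; lra).
  assert (Hdl : 0 < dl) by (unfold dl; apply Rmin_glb_lt; [lra|apply Rdiv_lt_0_compat; lra]).
  assert (Hdl1 : dl <= 1) by apply Rmin_l.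
  assert (Hdl2 : dl * K <= eps).
  { assert (dl <= eps / K) by apply Rmin_r.
    apply (Rmult_le_compat_r K) in H; [|lra]. unfold Rdiv in H.
    rewrite Rmult_assoc, Rinv_l in H by lra. lra. }
  destruct (HS dl Hdl) as [S' [FS DS]]. destruct (HT dl Hdl) as [T' [FT DT]].
  exists (compOp S' T'). split; [apply Hfp; auto|].
  assert (BT' : opbound (app T') (cT + dl)).
  { eapply opbound_ext; [|apply (opbound_sub _ _ cT dl HcT ltac:(lra) BT DT)].
    intros; simpl; ceq. }
  assert (B1 : opbound (fun v z => app S (fun y => csub (app T v y) (app T' v y)) z) (cS * dl)).
  { apply (opbound_comp (fun v y => csub (app T v y) (app T' v y)) (app S)); auto; lra. }
  assert (B2 : opbound (fun v z => csub (app S (app T' v) z) (app S' (app T' v) z)) (dl * (cT + dl))).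
  { apply (opbound_comp (app T') (fun w z => csub (app S w z) (app S' w z))); auto; lra. }
  eapply opbound_mono; [| |eapply opbound_ext; [|apply (opbound_add _ _ (cS * dl) (dl * (cT + dl)) ltac:(nra) ltac:(nra) B1 B2)]].
  - nra.
  - unfold K in Hdl2. nra.
  - intros v r Hr Hv z. simpl.
    rewrite op_sub.
    + ceq.
    + apply op_l2. exists r; auto.
    + apply op_l2. exists r; auto.
Qed.

Lemma glb_exists (S : R -> Prop) : (exists r, S r) -> (exists m, forall r, S r -> m <= r) ->
  exists m, is_glb S m.
Proof.
  intros [r0 H0] [m Hm].
  destruct (completeness (fun x => S (- x))) as [M [HM1 HM2]].
  - exists (- m). intros x Hx. specialize (Hm _ Hx). lra.
  - exists (- r0). rewrite Ropp_involutive. auto.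
  - exists (- M). split.
    + intros r Hr. assert (Hr' : S (- - r)) by (rewrite Ropp_involutive; auto).
      specialize (HM1 (- r) Hr'). lra.
    + intros m' Hm'. assert (M <= - m'). { apply HM2. intros x Hx. specialize (Hm' _ Hx). lra. }
      lra.
Qed.

Lemma Rinf_glb (S : R -> Prop) : (exists r, S r) -> (exists m, forall r, S r -> m <= r) ->
  is_glb S (Rinf S).
Proof.
  intros H1 H2. unfold Rinf. apply epsilon_spec. apply glb_exists; auto.
Qed.

Lemma Rinf_le S r : is_glb S (Rinf S) -> S r -> Rinf S <= r.
Proof. intros [H _] Hr. auto. Qed.

Lemma le_Rinf S a : is_glb S (Rinf S) -> (forall r, S r -> a <= r) -> a <= Rinf S.
Proof. intros [_ H] Hr. auto. Qed.

Lemma dist_refl (X : CDMS) (x : X) : dist X x x = 0.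
Proof. apply dist_eq0. reflexivity. Qed.

Section DF.
Variables (X Y : CDMS) (f : X -> Y) (C : R).
Hypothesis HC : 0 < C.

Lemma df_glb x y : is_glb (fun r => exists xt : X, r = dist X x xt + C / 2 + dist Y (f xt) y)
   (d_f X Y f C x y).
Proof.
  apply Rinf_glb.
  - exists (dist X x x + C / 2 + dist Y (f x) y). exists x; reflexivity.
  - exists 0. intros r [xt ->]. pose proof (dist_nonneg X x xt). pose proof (dist_nonneg Y (f xt) y). lra.
Qed.

Lemma df_le x xt y : d_f X Y f C x y <= dist X x xt + C / 2 + dist Y (f xt) y.
Proof. apply Rinf_le; [apply df_glb|]. exists xt; reflexivity. Qed.

Lemma df_ge x y a : (forall xt, a <= dist X x xt + C / 2 + dist Y (f xt) y) -> a <= d_f X Y f C x y.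
Proof. intros H. apply le_Rinf; [apply df_glb|]. intros r [xt ->]. auto. Qed.

Lemma df_self x : d_f X Y f C x (f x) <= C / 2.
Proof. pose proof (df_le x x (f x)). rewrite !dist_refl in H. lra. Qed.

Lemma df_metric : almost_isometry X Y f C -> is_metric_ext X Y (d_f X Y f C).
Proof.
  intros [_ HA]. split; [|split; [|split; [|split]]].
  - intros x y. apply Rlt_le_trans with (C / 2); [lra|]. apply df_ge.
    intros xt. pose proof (dist_nonneg X x xt). pose proof (dist_nonneg Y (f xt) y). lra.
  - intros x x' y.
    assert (d_f X Y f C x y - dist X x x' <= d_f X Y f C x' y); [|lra].
    apply df_ge. intros xt. pose proof (df_le x xt y). pose proof (dist_tri X x x' xt). lra.
  - intros x y y'.
    assert (d_f X Y f C x y - dist Y y' y <= d_f X Y f C x y'); [|lra].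
    apply df_ge. intros xt. pose proof (df_le x xt y). pose proof (dist_tri Y (f xt) y' y). lra.
  - intros x x' y.
    assert (dist X x x' - d_f X Y f C x' y <= d_f X Y f C x y); [|lra].
    apply df_ge. intros xt.
    assert (dist X x x' - (dist X x xt + C / 2 + dist Y (f xt) y) <= d_f X Y f C x' y); [|lra].
    apply df_ge. intros xt'.
    pose proof (dist_tri X x xt x'). pose proof (dist_tri X xt xt' x').
    rewrite (dist_sym X xt' x') in *.
    destruct (HA xt xt') as [H1 _].
    pose proof (dist_tri Y (f xt) y (f xt')). rewrite (dist_sym Y y (f xt')) in *.
    lra.
  - intros x y y'.
    assert (dist Y y y' - d_f X Y f C x y' <= d_f X Y f C x y); [|lra].
    apply df_ge. intros xt.
    assert (dist Y y y' - (dist X x xt + C / 2 + dist Y (f xt) y) <= d_f X Y f C x y'); [|lra].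
    apply df_ge. intros xt'.
    pose proof (dist_tri Y y (f xt) y'). pose proof (dist_tri Y (f xt) (f xt') y').
    rewrite (dist_sym Y y (f xt)) in *.
    destruct (HA xt xt') as [_ H1].
    pose proof (dist_tri X xt x xt'). rewrite (dist_sym X xt x) in *.
    lra.
Qed.
End DF.

Section DC.
Variables (X Y Z : CDMS) (d1 : X -> Y -> R) (d2 : Y -> Z -> R).
Hypothesis H1 : forall x y, 0 <= d1 x y.
Hypothesis H2 : forall y z, 0 <= d2 y z.

Lemma dcomp_glb x z (y0 : Y) : is_glb (fun r => exists y : Y, r = d1 x y + d2 y z) (dcomp X Y Z d1 d2 x z).
Proof.
  apply Rinf_glb.
  - exists (d1 x y0 + d2 y0 z). exists y0; reflexivity.
  - exists 0. intros r [y ->]. pose proof (H1 x y). pose proof (H2 y z). lra.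
Qed.

Lemma dcomp_le x z y : dcomp X Y Z d1 d2 x z <= d1 x y + d2 y z.
Proof. apply Rinf_le; [apply (dcomp_glb x z y)|]. exists y; reflexivity. Qed.

Lemma dcomp_ge x z (y0 : Y) a : (forall y, a <= d1 x y + d2 y z) -> a <= dcomp X Y Z d1 d2 x z.
Proof. intros H. apply le_Rinf; [apply (dcomp_glb x z y0)|]. intros r [y ->]. auto. Qed.
End DC.

Lemma ball_list (Y : CDMS) : bounded_geometry Y -> forall (y0 : Y) Rad,
  exists l : list Y, NoDup l /\ forall y, dist Y y0 y <= Rad -> In y l.
Proof.
  intros BG y0 Rad. destruct (BG Rad) as [N HN].
  apply NNPP. intros Hn.
  assert (Hext : forall l : list Y, NoDup l -> exists y, dist Y y0 y <= Rad /\ ~ In y l).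
  { intros l Hl. apply NNPP. intros H. apply Hn. exists l. split; auto.
    intros y Hy. apply NNPP. intros Hy'. apply H. exists y; auto. }
  assert (Hlen : forall n, exists l : list Y, NoDup l /\ (forall y, In y l -> dist Y y0 y <= Rad)
     /\ length l = n).
  { induction n.
    - exists nil. repeat split; auto. constructor. intros y [].
    - destruct IHn as [l [Hl [Hb Hle]]]. destruct (Hext l Hl) as [y [Hy Hny]].
      exists (y :: l). repeat split.
      + constructor; auto.
      + intros y' [<-|H]; auto.
      + simpl; lia. }
  destruct (Hlen (S N)) as [l [Hl [Hb Hle]]].
  specialize (HN y0 l Hl Hb). lia.
Qed.

Lemma delta_l2 {X : Type} (x : X) : l2 (delta x).
Proof.
  exists 1. split; [lra|]. intros l Hl.
  assert (H : sumsq (delta x) l <= 1 /\ (~ In x l -> sumsq (delta x) l = 0)).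
  { induction Hl as [|a l Ha Hl IH].
    - simpl; split; [lra|auto].
    - simpl. unfold delta at 1 3. destruct (excluded_middle_informative (x = a)) as [<-|ne].
      + destruct IH as [_ IH]. rewrite IH by auto. split; [replace (cnorm2 c1) with 1 by (unfold cnorm2, c1; simpl; ring); lra|].
        intros H; exfalso; apply H; auto.
      + rewrite cnorm2_c0. destruct IH as [IH1 IH2]. split; [lra|].
        intros H. rewrite IH2; [ring|]. intros H'; apply H; auto. }
  destruct H; lra.
Qed.

Lemma lsum_delta {Y : Type} (u : Y -> cpx) (l : list Y) : NoDup l -> forall y',
  (In y' l -> lsum l (fun y y'' => cmul (u y) (delta y y'')) y' = u y') /\
  (~ In y' l -> lsum l (fun y y'' => cmul (u y) (delta y y'')) y' = c0).
Proof.
  intros Hl y'. induction Hl as [|a l Ha Hl IH].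
  - split; [intros []|intros; reflexivity].
  - unfold lsum in *; simpl.
    destruct (classic (a = y')) as [<-|ne]; destruct IH as [IH1 IH2].
    + assert (E : delta a a = c1) by (unfold delta; destruct (excluded_middle_informative (a = a)); congruence).
      rewrite E. split; intros H.
      * rewrite IH2 by auto. ceq.
      * exfalso; apply H; auto.
    + assert (E : delta a y' = c0) by (unfold delta; destruct (excluded_middle_informative (a = y')); congruence).
      rewrite E. split; intros H.
      * rewrite IH1 by (destruct H; [contradiction|auto]). ceq.
      * rewrite IH2 by (intros H'; apply H; auto). ceq.
Qed.

Lemma op_finsupp {Y Z : Type} (S : Op Y Z) (u : Y -> cpx) (l : list Y) :
  NoDup l -> (forall y, ~ In y l -> u y = c0) -> forall z,
  app S u z = fold_right (fun y acc => cadd (cmul (u y) (app S (delta y) z)) acc) c0 l.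
Proof.
  intros Hl Hu z.
  rewrite (op_ext S u (lsum l (fun y y'' => cmul (u y) (delta y y'')))).
  2: { intros y'. destruct (classic (In y' l)) as [H|H].
       - symmetry; apply (lsum_delta u l Hl y'); auto.
       - rewrite Hu by auto. symmetry; apply (lsum_delta u l Hl y'); auto. }
  rewrite op_lsum by (intros; apply l2_scal, delta_l2).
  clear Hu Hl. induction l; simpl; [reflexivity|].
  rewrite IHl. rewrite op_scal by apply delta_l2. reflexivity.
Qed.

Lemma fold_zero {Y : Type} (l : list Y) (t : Y -> cpx) :
  (forall y, In y l -> t y = c0) -> fold_right (fun y acc => cadd (t y) acc) c0 l = c0.
Proof.
  induction l; simpl; intros H; [reflexivity|]. rewrite H, IHl by auto. ceq.
Qed.

Lemma fp_comp {X Y Z : Type} (d1 : X -> Y -> R) (d2 : Y -> Z -> R) (d3 : X -> Z -> R)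
  (S : Op Y Z) (T : Op X Y) :
  (forall x L, exists l : list Y, NoDup l /\ forall y, d1 x y < L -> In y l) ->
  (forall x y z, d3 x z <= d1 x y + d2 y z) ->
  finite_prop d2 S -> finite_prop d1 T -> finite_prop d3 (compOp S T).
Proof.
  intros Hball Hd3 [L2 HS] [L1 HT]. exists (L1 + L2). intros x z Hxz. simpl.
  destruct (Hball x L1) as [l [Hl Hin]].
  rewrite (op_finsupp S (app T (delta x)) l Hl).
  - apply fold_zero. intros y _.
    destruct (Rlt_dec (d1 x y) L1) as [h|h].
    + rewrite HS; [ceq|]. specialize (Hd3 x y z). lra.
    + rewrite HT by lra. ceq.
  - intros y Hy. apply HT. destruct (Rlt_dec (d1 x y) L1) as [h|h]; [exfalso; auto|lra].
Qed.

Lemma lincomb_Mspace {X Y Z : Type} (M : Op X Y -> Prop) (N : Op Y Z -> Prop)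
  (d3 : X -> Z -> R) (l : list (cpx * Op X Y * Op Y Z)) :
  (forall T S, M T -> N S -> Mspace d3 (compOp S T)) ->
  Forall (fun p => M (snd (fst p)) /\ N (snd p)) l ->
  exists O : Op X Z, Mspace d3 O /\ forall v z, app O v z = lincomb l v z.
Proof.
  intros Hc Hl. induction Hl as [|p l [HM HN] Hl IH].
  - exists zeroOp. split; [apply Mspace_zero|]. intros; reflexivity.
  - destruct IH as [O [HO E]].
    exists (addOp (scalOp (fst (fst p)) (compOp (snd p) (snd (fst p)))) O). split.
    + apply Mspace_add; auto. apply Mspace_scal; auto.
    + intros v z. simpl. rewrite E. reflexivity.
Qed.

Lemma tensor_sub {X Y Z : Type} (M : Op X Y -> Prop) (N : Op Y Z -> Prop)
  (d3 : X -> Z -> R) (T : Op X Z) :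
  (forall T S, M T -> N S -> Mspace d3 (compOp S T)) ->
  tensor M N T -> Mspace d3 T.
Proof.
  intros Hc HT. apply Mspace_closed. intros eps He.
  destruct (HT eps He) as [l [Hl B]].
  destruct (lincomb_Mspace M N d3 l Hc Hl) as [O [HO E]].
  exists O. split; auto. eapply opbound_ext; [|exact B]. intros; simpl. rewrite E; reflexivity.
Qed.

Section PInj.
Context {A B : Type} (G : B -> option A).
Hypothesis Ginj : forall b b' a, G b = Some a -> G b' = Some a -> b = b'.

Definition pinj_app (v : A -> cpx) (b : B) : cpx :=
  match G b with Some a => v a | None => c0 end.

Definition optl (b : B) : list A := match G b with Some a => [a] | None => [] end.

Lemma pinj_sumsq (v : A -> cpx) (l : list B) : NoDup l ->
  sumsq (pinj_app v) l = sumsq v (flat_map optl l) /\ NoDup (flat_map optl l) /\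
  (forall a, In a (flat_map optl l) -> exists b, In b l /\ G b = Some a).
Proof.
  induction 1 as [|b l Hb Hl IH]; simpl.
  - repeat split; auto. constructor. intros a [].
  - destruct IH as [E [N I]].
    replace (optl b) with (match G b with Some a => [a] | None => [] end) by reflexivity.
    replace (pinj_app v b) with (match G b with Some a => v a | None => c0 end) by reflexivity.
    destruct (G b) as [a|] eqn:Eb; simpl.
    + repeat split.
      * rewrite E. reflexivity.
      * constructor; auto. intros Ha. destruct (I a Ha) as [b' [Hb' Eb']].
        assert (b = b') by (eapply Ginj; eauto). subst; contradiction.
      * intros a' [<-|Ha']; [exists b; auto|]. destruct (I a' Ha') as [b' [? ?]]; exists b'; auto.
    + repeat split.
      * rewrite E, cnorm2_c0. ring.
      * auto.
      * intros a' Ha'. destruct (I a' Ha') as [b' [? ?]]; exists b'; auto.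
Qed.

Lemma pinj_normle (v : A -> cpx) r : normle v r -> normle (pinj_app v) r.
Proof.
  intros H l Hl. destruct (pinj_sumsq v l Hl) as [E [N _]]. rewrite E. apply H; auto.
Qed.

Lemma pinj_add : forall u v, l2 u -> l2 v -> forall b,
  pinj_app (fun x => cadd (u x) (v x)) b = cadd (pinj_app u b) (pinj_app v b).
Proof. intros. unfold pinj_app. destruct (G b); [reflexivity|ceq]. Qed.
Lemma pinj_scal : forall a u, l2 u -> forall b,
  pinj_app (fun x => cmul a (u x)) b = cmul a (pinj_app u b).
Proof. intros. unfold pinj_app. destruct (G b); [reflexivity|ceq]. Qed.
Lemma pinj_bdd : exists c, 0 <= c /\ opbound pinj_app c.
Proof. exists 1. split; [lra|]. intros v r Hr Hv. rewrite Rmult_1_l. apply pinj_normle; auto. Qed.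
Definition pinjOp : Op A B :=
  {| app := pinj_app; op_add := pinj_add; op_scal := pinj_scal; op_bdd := pinj_bdd |}.
End PInj.

Lemma delta_ne {X : Type} (x x' : X) : x <> x' -> delta x x' = c0.
Proof. intros H. unfold delta. destruct (excluded_middle_informative (x = x')); congruence. Qed.
Lemma delta_eq {X : Type} (x : X) : delta x x = c1.
Proof. unfold delta. destruct (excluded_middle_informative (x = x)); congruence. Qed.

Section Decomp.
Variables (X Y Z : CDMS) (f : X -> Y) (Cf : R) (e : X -> nat).
Variables (dxy : X -> Y -> R) (dyz : Y -> Z -> R) (dxz : X -> Z -> R).
Hypothesis e_inj : forall x y, e x = e y -> x = y.
Hypothesis BGX : bounded_geometry X.
Hypothesis fiber : forall x x', f x = f x' -> dist X x x' <= Cf.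
Hypothesis Hself : forall x, dxy x (f x) < Cf.
Hypothesis Hcoarse : forall x z, dyz (f x) z - Cf <= dxz x z.

Definition Pc (x x' : X) : Prop := f x' = f x /\ (e x' < e x)%nat.

Lemma Pc_list x : exists l : list X, NoDup l /\ forall x', In x' l <-> Pc x x'.
Proof.
  destruct (ball_list X BGX x Cf) as [l [Hl Hin]].
  exists (filter (fun x' => if excluded_middle_informative (Pc x x') then true else false) l).
  split; [apply NoDup_filter; auto|].
  intros x'. rewrite filter_In. split.
  - intros [_ H]. destruct (excluded_middle_informative (Pc x x')); [auto|discriminate].
  - intros H. split.
    + apply Hin. apply fiber. destruct H; auto.
    + destruct (excluded_middle_informative (Pc x x')); [auto|contradiction].
Qed.

Definition Pl (x : X) : list X :=
  epsilon (inhabits nil) (fun l => NoDup l /\ forall x', In x' l <-> Pc x x').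
Lemma Pl_spec x : NoDup (Pl x) /\ forall x', In x' (Pl x) <-> Pc x x'.
Proof. unfold Pl. apply epsilon_spec. apply Pc_list. Qed.

Definition color (x : X) : nat := length (Pl x).

Lemma color_lt x x' : f x = f x' -> (e x < e x')%nat -> (color x < color x')%nat.
Proof.
  intros Hf He. unfold color.
  destruct (Pl_spec x) as [N1 I1]. destruct (Pl_spec x') as [N2 I2].
  change (S (length (Pl x)) <= length (Pl x'))%nat.
  change (length (x :: Pl x) <= length (Pl x'))%nat.
  apply NoDup_incl_length.
  - constructor; auto. intros H. apply I1 in H. destruct H; lia.
  - intros y [<-|H].
    + apply I2. split; auto.
    + apply I1 in H. apply I2. destruct H as [H1 H2]. split; [congruence|lia].
Qed.

Lemma color_inj x x' : f x = f x' -> color x = color x' -> x = x'.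
Proof.
  intros Hf Hc. destruct (Nat.lt_total (e x) (e x')) as [h|[h|h]].
  - pose proof (color_lt x x' Hf h). lia.
  - apply e_inj; auto.
  - pose proof (color_lt x' x (eq_sym Hf) h). lia.
Qed.

Definition Nb : nat := proj1_sig (constructive_indefinite_description _ (BGX Cf)).

Lemma color_bound x : (color x <= Nb)%nat.
Proof.
  unfold Nb. destruct (constructive_indefinite_description _ (BGX Cf)) as [N HN]. simpl.
  destruct (Pl_spec x) as [N1 I1]. apply (HN x); auto.
  intros y Hy. apply I1 in Hy. destruct Hy as [Hy _]. apply fiber; auto.
Qed.

Definition sel (i : nat) (y : Y) : option X :=
  match excluded_middle_informative (exists x, color x = i /\ f x = y) with
  | left H => Some (proj1_sig (constructive_indefinite_description _ H))
  | right _ => None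
  end.

Lemma sel_some i y x : sel i y = Some x -> color x = i /\ f x = y.
Proof.
  unfold sel. destruct (excluded_middle_informative _) as [H|H]; [|discriminate].
  destruct (constructive_indefinite_description _ H) as [x' Hx']. simpl. intros E; inversion E; subst; auto.
Qed.

Lemma sel_none i y : sel i y = None -> forall x, ~ (color x = i /\ f x = y).
Proof.
  unfold sel. destruct (excluded_middle_informative _) as [H|H]; [discriminate|].
  intros _ x Hx. apply H; eauto.
Qed.

Lemma sel_f i x : color x = i -> sel i (f x) = Some x.
Proof.
  intros Hc. destruct (sel i (f x)) as [x'|] eqn:E.
  - apply sel_some in E. destruct E as [E1 E2]. f_equal. apply color_inj; congruence.
  - exfalso. apply (sel_none i (f x) E x). auto.
Qed.

Lemma sel_inj i : forall y y' x, sel i y = Some x -> sel i y' = Some x -> y = y'.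
Proof.
  intros y y' x H1 H2. apply sel_some in H1. apply sel_some in H2. destruct H1, H2. congruence.
Qed.

Definition G2 (i : nat) (x : X) : option Y :=
  if Nat.eq_dec (color x) i then Some (f x) else None.

Lemma G2_inj i : forall x x' y, G2 i x = Some y -> G2 i x' = Some y -> x = x'.
Proof.
  intros x x' y. unfold G2. destruct (Nat.eq_dec (color x) i); [|discriminate].
  destruct (Nat.eq_dec (color x') i); [|discriminate]. intros H1 H2. inversion H1; inversion H2.
  apply color_inj; congruence.
Qed.

Definition Vop (i : nat) : Op X Y := pinjOp (sel i) (sel_inj i).
Definition Uop (i : nat) : Op Y X := pinjOp (G2 i) (G2_inj i).

Lemma UV i v x : app (Uop i) (app (Vop i) v) x = if Nat.eq_dec (color x) i then v x else c0.
Proof.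
  simpl. unfold pinj_app, G2. destruct (Nat.eq_dec (color x) i) as [h|h]; [|reflexivity].
  rewrite sel_f by auto. reflexivity.
Qed.

Lemma fp_V i : finite_prop dxy (Vop i).
Proof.
  exists Cf. intros x y Hxy. simpl. unfold pinj_app.
  destruct (sel i y) as [x'|] eqn:E; [|reflexivity].
  apply sel_some in E. destruct E as [_ E]. apply delta_ne. intros <-.
  subst. pose proof (Hself x). lra.
Qed.

Lemma fp_W (T : Op X Z) i : finite_prop dxz T -> finite_prop dyz (compOp T (Uop i)).
Proof.
  intros [L HL]. exists (L + Cf). intros y z Hyz. simpl.
  destruct (classic (exists x0, color x0 = i /\ f x0 = y)) as [[x0 [H1 H2]]|Hn].
  - rewrite (op_ext T _ (delta x0)).
    + apply HL. subst. pose proof (Hcoarse x0 z). lra.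
    + intros x. unfold pinj_app, G2. destruct (Nat.eq_dec (color x) i) as [h|h].
      * destruct (classic (x0 = x)) as [<-|ne].
        -- subst. rewrite !delta_eq. reflexivity.
        -- rewrite !delta_ne; auto. intros E. apply ne. apply color_inj; congruence.
      * rewrite delta_ne; auto. congruence.
  - rewrite (op_ext T _ (fun _ => c0)); [apply op_zero|].
    intros x. unfold pinj_app, G2. destruct (Nat.eq_dec (color x) i) as [h|h]; [|reflexivity].
    apply delta_ne. intros E. apply Hn. exists x; auto.
Qed.

Lemma lsum_colors (v : X -> cpx) x : forall n m, (m <= color x < m + n)%nat ->
  lsum (seq m n) (fun i x => if Nat.eq_dec (color x) i then v x else c0) x = v x.
Proof.
  assert (Hz : forall n m, (color x < m)%nat ->
    lsum (seq m n) (fun i x => if Nat.eq_dec (color x) i then v x else c0) x = c0).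
  { induction n; intros m Hm; [reflexivity|]. unfold lsum in *; simpl.
    rewrite IHn by lia. destruct (Nat.eq_dec (color x) m); [lia|ceq]. }
  induction n; intros m Hm; [lia|]. unfold lsum in *; simpl.
  destruct (Nat.eq_dec (color x) m) as [h|h].
  - rewrite Hz by lia. ceq.
  - rewrite IHn by lia. ceq.
Qed.

Definition declist (T : Op X Z) : list (cpx * Op X Y * Op Y Z) :=
  map (fun i => (c1, Vop i, compOp T (Uop i))) (seq 0 (S Nb)).

Lemma decomp (T : Op X Z) : finite_prop dxz T ->
  Forall (fun p => finite_prop dxy (snd (fst p)) /\ finite_prop dyz (snd p)) (declist T) /\
  forall v, l2 v -> forall z, lincomb (declist T) v z = app T v z.
Proof.
  intros HT. split.
  - unfold declist. apply Forall_forall. intros p Hp. apply in_map_iff in Hp.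
    destruct Hp as [i [<- _]]. simpl. split; [apply fp_V|apply fp_W; auto].
  - intros v Hv z.
    set (h := fun i x => if Nat.eq_dec (color x) i then v x else c0).
    assert (Hh : forall i, In i (seq 0 (S Nb)) -> l2 (h i)).
    { intros i _. apply (l2_dom _ v); auto. intros x. unfold h.
      destruct (Nat.eq_dec (color x) i); [lra|rewrite cnorm2_c0; apply cnorm2_nonneg]. }
    rewrite (op_ext T v (lsum (seq 0 (S Nb)) h)).
    2: { intros x. symmetry. apply lsum_colors. pose proof (color_bound x). lia. }
    rewrite op_lsum by auto. unfold declist. clear Hh.
    generalize (seq 0 (S Nb)). intros l. induction l; simpl; [reflexivity|].
    rewrite IHl. f_equal.
    rewrite (op_ext T _ (h a)) by (intros x; apply UV). ceq.
Qed.
End Decomp.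

Theorem theorem3p3 :
  forall (X Y Z : CDMS),
    bounded_geometry X -> bounded_geometry Y -> bounded_geometry Z ->
  forall (f : X -> Y) (g : Y -> Z) (Cf Cg Cgf : R),
    almost_isometry X Y f Cf ->
    almost_isometry Y Z g Cg ->
    almost_isometry X Z (fun x => g (f x)) Cgf ->
    is_metric_ext X Y (d_f X Y f Cf) /\
    is_metric_ext Y Z (d_f Y Z g Cg) /\
    same_ops (Mspace (d_f X Z (fun x => g (f x)) Cgf))
             (tensor (Mspace (d_f X Y f Cf)) (Mspace (d_f Y Z g Cg))) /\
    same_ops (tensor (Mspace (d_f X Y f Cf)) (Mspace (d_f Y Z g Cg)))
             (Mspace (dcomp X Y Z (d_f X Y f Cf) (d_f Y Z g Cg))) /\
    (forall C, 0 < C -> same_ops (Mspace (d_f X X (fun x => x) C)) (Cu X)).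
Proof.
  intros X Y Z BGX BGY BGZ f g Cf Cg Cgf Af Ag Agf.
  pose proof Af as [HCf Af']. pose proof Ag as [HCg Ag']. pose proof Agf as [HCgf Agf'].
  pose proof (df_metric X Y f Cf HCf Af) as Mf.
  pose proof (df_metric Y Z g Cg HCg Ag) as Mg.
  set (df := d_f X Y f Cf) in *. set (dg := d_f Y Z g Cg) in *.
  set (dgf := d_f X Z (fun x => g (f x)) Cgf).
  set (dc := dcomp X Y Z df dg).
  destruct Mf as [Mf1 [Mf2 [Mf3 [Mf4 Mf5]]]].
  destruct Mg as [Mg1 [Mg2 [Mg3 [Mg4 Mg5]]]].
  assert (df_nn : forall x y, 0 <= df x y) by (intros; left; auto).
  assert (dg_nn : forall x y, 0 <= dg x y) by (intros; left; auto).
  assert (dfself : forall x, df x (f x) <= Cf / 2) by (intros; apply df_self; auto).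
  assert (dgself : forall y, dg y (g y) <= Cg / 2) by (intros; apply df_self; auto).
  assert (A : forall T, tensor (Mspace df) (Mspace dg) T <-> Mspace dc T).
  { intros T. split.
    - apply tensor_sub. intros T0 S0 HT0 HS0.
      apply (Mspace_comp df dg dc S0 T0); auto.
      intros S' T' FS FT. apply (fp_comp df dg dc S' T'); auto.
      + intros x L. destruct (ball_list Y BGY (f x) (Cf / 2 + L)) as [l [Hl Hin]].
        exists l. split; auto. intros y Hy. apply Hin.
        pose proof (Mf5 x (f x) y). pose proof (dfself x). lra.
      + intros x y z. apply dcomp_le; auto.
    - intros HT eps He. destruct (HT eps He) as [S' [FS B]].
      destruct (countable X) as [e e_inj].
      assert (fiber : forall x x', f x = f x' -> dist X x x' <= Cf).
      { intros x x' E. destruct (Af' x x') as [H _]. rewrite E, dist_refl in H. lra. }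
      assert (Hself : forall x, df x (f x) < Cf) by (intros x; pose proof (dfself x); lra).
      assert (Hco : forall x z, dg (f x) z - Cf <= dc x z).
      { intros x z. apply (dcomp_ge X Y Z df dg df_nn dg_nn x z (f x)). intros y.
        pose proof (Mg2 (f x) y z). pose proof (Mf5 x (f x) y). pose proof (dfself x). lra. }
      destruct (decomp X Y Z f Cf e df dg dc e_inj BGX fiber Hself Hco S' FS) as [F E].
      exists (declist X Y Z f Cf e e_inj BGX fiber S'). split.
      + eapply Forall_impl; [|exact F]. intros p [H1 H2]. split; apply Mspace_of_fp; auto.
      + eapply opbound_ext; [|exact B]. intros v r Hr Hv z. rewrite E; auto. exists r; auto. }
  assert (Bc : forall T, Mspace dgf T <-> Mspace dc T).
  { intros T. split; apply Mspace_mono.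
    - intros L. exists (L + Cf / 2 + Cg / 2). intros x z Hxz.
      assert (dc x z - (Cf / 2 + Cg / 2) <= dgf x z); [|lra].
      apply df_ge; auto. intros xt.
      pose proof (dcomp_le X Y Z df dg df_nn dg_nn x z (f xt)) as H1.
      pose proof (df_le X Y f Cf HCf x xt (f xt)) as H2.
      pose proof (df_le Y Z g Cg HCg (f xt) (f xt) z) as H3.
      rewrite dist_refl in H2, H3. fold df dg dc in H1, H2, H3. lra.
    - intros L. exists (L + Cgf / 2 + Cf / 2 + 3 * Cg / 2). intros x z Hxz.
      pose proof (df_le X Z (fun x => g (f x)) Cgf HCgf x x z) as H0.
      rewrite dist_refl in H0. fold dgf in H0.
      assert (dist Z (g (f x)) z - Cf / 2 - 3 * Cg / 2 <= dc x z); [|lra].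
      apply (dcomp_ge X Y Z df dg df_nn dg_nn x z (f x)). intros y.
      pose proof (Mf5 x (f x) y). pose proof (dfself x).
      pose proof (Mg5 y (g y) z). pose proof (dgself y).
      destruct (Ag' (f x) y) as [_ Hg1].
      pose proof (dist_tri Z (g (f x)) (g y) z). lra. }
  split; [|split; [|split; [|split]]].
  - unfold df. apply df_metric; auto.
  - unfold dg. apply df_metric; auto.
  - intros T. rewrite Bc, A. reflexivity.
  - intros T. apply A.
  - intros C HC T. unfold Cu.
    assert (Hid : forall x y, d_f X X (fun x => x) C x y = dist X x y + C / 2).
    { intros x y. apply Rle_antisym.
      - pose proof (df_le X X (fun x => x) C HC x x y). cbv beta in H. rewrite dist_refl in H. lra.
      - apply df_ge; auto. intros xt. cbv beta. pose proof (dist_tri X x xt y). lra. }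
    split; apply Mspace_mono.
    + intros L. exists L. intros x y H. rewrite Hid. lra.
    + intros L. exists (L + C / 2). intros x y H. rewrite Hid in H. lra.
Qed.
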